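(* Let $(X,d_X,m_X)$ and $(Y,d_Y,m_Y)$ be metric measure spaces and $p:X\to Y$ a 1-Lipschitz map with $p_*m_X=m_Y$, and let $\{\mu_y\}_{y\in Y}$ be the disintegration of $m_X$ for $p$. Assume there exists a Borel set $\Omega\subset Y$ with $m_Y(Y\setminus\Omega)=0$ such that $W_2(\mu_y,\mu_{y'})=d_Y(y,y')$ for all $y,y'\in\Omega$. Then $p$ is a submetry. In particular, $\{p^{-1}(y)\}_{y\in Y}$ is a metric measure foliation of $X$ and $Y$ is mm-isomorphic to the quotient space $X^*$.
   Context: A metric measure space $(X,d,m)$: complete separable metric space with Borel measure satisfying $0<m(B_r(x))<\infty$ for all $x$, $r>0$. The disintegration of $m_X$ for $p$ is the ($m_Y$-a.e. unique) family of Borel probability measures with $y\mapsto\mu_y(A)$ Borel, $\mu_y(X\setminus p^{-1}(y))=0$ for $m_Y$-a.e. $y$, and $\int f\,dm_X=\int\int f\,d\mu_y\,dm_Y(y)$ for Borel $f\ge0$. A map $p:X\to Y$ is a submetry if $p(B_r(x))=B_r(p(x))$ for all $x\in X$, $r>0$ (open balls). A metric foliation is a family of pairwise disjoint closed sets covering $X$ with $d(F,F')=d(x,F')$ for leaves $F,F'$, $x\in F$; its quotient $X^*$ has distance $d^*(y,y')=d(p^{-1}(y),p^{-1}(y'))$ and measure $m^*=p_*m$; it is a metric measure foliation if $m^*$ is locally finite and the disintegration of $m$ for the quotient map satisfies $W_2(\mu_y,\mu_{y'})=d^*(y,y')$ on a Borel set of full $m^*$-measure. mm-isomorphic means there is a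 measure-preserving isometry. *)

(* Defs.v *)
From HB Require Import structures.
From mathcomp Require Import all_boot all_order all_algebra.
From mathcomp Require Import all_classical all_reals all_analysis.
From mathcomp Require Import measurable_realfun.
Set Implicit Arguments. Unset Strict Implicit. Unset Printing Implicit Defensive.
Import Order.TTheory GRing.Theory Num.Theory.
Local Open Scope classical_set_scope.
Local Open Scope ring_scope.

Section Defs.
Context {R : realType}.

Definition is_metric {X : Type} (d : X -> X -> R) : Prop :=
  [/\ forall x y, 0 <= d x y,
      forall x y, d x y = 0 <-> x = y,
      forall x y, d x y = d y x &
      forall x y z, d x z <= d x y + d y z].

Definition oball {X : Type} (d : X -> X -> R) (x : X) (r : R) : set X :=
  [set y | d x y < r].

Definition metric_open {X : Type} (d : X -> X -> R) (A : set X) : Prop :=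
  forall x, A x -> exists2 r : R, 0 < r & oball d x r `<=` A.

Definition metric_closed {X : Type} (d : X -> X -> R) (A : set X) : Prop :=
  metric_open d (~` A).

Definition metric_complete {X : Type} (d : X -> X -> R) : Prop :=
  forall u : nat -> X,
    (forall e : R, 0 < e -> exists N : nat, forall m n : nat,
        (N <= m)%N -> (N <= n)%N -> d (u m) (u n) < e) ->
    exists x : X, forall e : R, 0 < e -> exists N : nat, forall n : nat,
        (N <= n)%N -> d (u n) x < e.

Definition metric_separable {X : Type} (d : X -> X -> R) : Prop :=
  exists D : set X, countable D /\
    forall x (e : R), 0 < e -> exists2 z, D z & d x z < e.

Definition mm_space {dsp : measure_display} (X : measurableType dsp)
    (d : X -> X -> R) (m : {measure set X -> \bar R}) : Prop :=
  [/\ is_metric d, metric_complete d, metric_separable d,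
      (@measurable _ X) = <<s metric_open d >> &
      forall x (r : R), 0 < r ->
        (0 < m (oball d x r))%E /\ (m (oball d x r) < +oo)%E].

Definition coupling {dsp : measure_display} {X : measurableType dsp}
    (mu nu : probability X R) (pi : probability (X * X)%type R) : Prop :=
  (forall A, measurable A -> pi (A `*` setT) = mu A) /\
  (forall B, measurable B -> pi (setT `*` B) = nu B).

Definition W2sq {dsp : measure_display} {X : measurableType dsp}
    (d : X -> X -> R) (mu nu : probability X R) : \bar R :=
  ereal_inf [set c | exists pi : probability (X * X)%type R,
                       coupling mu nu pi /\
                       c = (\int[pi]_z ((d z.1 z.2) ^+ 2)%:E)%E].

Definition W2 {dsp : measure_display} {X : measurableType dsp}
    (d : X -> X -> R) (mu nu : probability X R) : \bar R :=
  match W2sq d mu nu with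
  | r%:E => (Num.sqrt r)%:E
  | +oo%E => +oo%E
  | -oo%E => -oo%E
  end.

Definition is_disintegration {dx dy : measure_display}
    {X : measurableType dx} {Y : measurableType dy}
    (mX : {measure set X -> \bar R}) (mY : {measure set Y -> \bar R})
    (p : X -> Y) (mu : Y -> probability X R) : Prop :=
  [/\ forall A, measurable A -> measurable_fun [set: Y] ((fun y => mu y A) : Y -> \bar R),
      {ae mY, forall y, mu y (~` (p @^-1` [set y])) = 0%E} &
      forall f : X -> \bar R, measurable_fun setT f -> (forall x, 0 <= f x)%E ->
        (\int[mX]_x f x = \int[mY]_y (\int[mu y]_x f x))%E].

Definition submetry {X Y : Type} (dX : X -> X -> R) (dY : Y -> Y -> R)
    (p : X -> Y) : Prop :=
  forall x (r : R), 0 < r -> p @` oball dX x r = oball dY (p x) r.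

Definition dist_pt_set {X : Type} (d : X -> X -> R) (x : X) (B : set X) : R :=
  inf [set d x b | b in B].

Definition dist_set {X : Type} (d : X -> X -> R) (A B : set X) : R :=
  inf [set d ab.1 ab.2 | ab in A `*` B].

End Defs.

(* Main.v *)
Require Import Defs.
From HB Require Import structures.
From mathcomp Require Import all_boot all_order all_algebra.
From mathcomp Require Import all_classical all_reals all_analysis.
From mathcomp Require Import measurable_realfun.
From mathcomp Require Import lra.
Import Order.TTheory GRing.Theory Num.Theory.
Local Open Scope classical_set_scope.
Local Open Scope ring_scope.

Section MetricFacts.
Context {R : realType} {T : Type} (d : T -> T -> R) (hd : is_metric d).

Lemma dge0 x y : 0 <= d x y. Proof. by case: hd. Qed.
Lemma dsym x y : d x y = d y x. Proof. by case: hd. Qed.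
Lemma dtri x y z : d x z <= d x y + d y z. Proof. by case: hd. Qed.
Lemma dxx x : d x x = 0. Proof. by case: hd => _ h _ _; exact: (proj2 (h x x) erefl). Qed.
Lemma deq0 x y : d x y = 0 -> x = y. Proof. by case: hd => _ h _ _; exact: (proj1 (h x y)). Qed.

Lemma oball_open x r : metric_open d (oball d x r).
Proof.
move=> y; rewrite /oball /= => hy; exists (r - d x y); first by rewrite subr_gt0.
move=> z; rewrite /oball /= => hz; have := dtri x y z; lra.
Qed.

Lemma dense_seq (x0 : T) : metric_separable d ->
  exists q : nat -> T, forall x e, 0 < e -> exists k, d x (q k) < e.
Proof.
move=> [D [cD hD]].
have [f finj] := countable_injP _ cD.
pose q (k : nat) : T :=
  match pselect (exists2 z, D z & f z = k) with
  | left h => projT1 (cid2 h)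
  | right _ => x0
  end.
exists q => x e e0; have [z Dz hz] := hD x e e0.
exists (f z); rewrite /q; case: pselect => [h|]; last by case; exists z.
case: (cid2 h) => z' Dz' fz' /=.
by rewrite (finj z' z) ?inE.
Qed.

End MetricFacts.

Lemma inf_eqP {R : realType} (E : set R) v :
  (forall e, E e -> v <= e) ->
  (forall eps, 0 < eps -> exists2 e, E e & e < v + eps) -> inf E = v.
Proof.
move=> lb ad.
have [e0 Ee0 _] := ad 1 ltr01.
have hl : has_lbound E by exists v.
apply/eqP; rewrite eq_le; apply/andP; split; last first.
  by apply: lb_le_inf; [exists e0|].
apply/ler_addgt0Pr => eps eps0; have [e Ee ev] := ad eps eps0.
by apply: le_trans (ltW ev); apply: ge_inf.
Qed.
Arguments dge0 {R T d} hd x y.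
Arguments dsym {R T d} hd x y.
Arguments dtri {R T d} hd x y z.
Arguments dxx {R T d} hd x.
Arguments deq0 {R T d} hd {x y}.
Section MeasFacts.
Context {R : realType} {dsp : measure_display} {T : measurableType dsp}
  (d : T -> T -> R) (hd : is_metric d)
  (hB : (@measurable _ T) = <<s metric_open d >>).

Lemma open_meas A : metric_open d A -> measurable A.
Proof. by move=> hA; rewrite hB; apply: sub_sigma_algebra. Qed.

Lemma oball_meas x r : measurable (oball d x r).
Proof. exact/open_meas/oball_open. Qed.

Lemma closed_meas A : metric_closed d A -> measurable A.
Proof. by move=> /open_meas/measurableC; rewrite setCK. Qed.

Lemma lt_meas (q : nat -> T) :
  (forall x e, 0 < e -> exists k, d x (q k) < e) ->
  forall t, measurable [set z : T * T | d z.1 z.2 < t].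
Proof.
move=> hq t.
pose rho (n : nat) : R := n.+1%:R^-1 / 2.
have -> : [set z : T * T | d z.1 z.2 < t] =
  \bigcup_k \bigcup_n (oball d (q k) (rho n) `*` oball d (q k) (t - rho n)).
  apply/seteqP; split => [[a b] /= hab|[a b] [k _ [n _ []]]]; last first.
    rewrite /oball /= => h1 h2; have := dtri hd a (q k) b.
    rewrite (dsym hd a (q k)); lra.
  rewrite /= in hab; have [n hn] := ltr_add_invr hab.
  have r0 : 0 < rho n by rewrite /rho divr_gt0.
  have [k hk] := hq a (rho n) r0.
  exists k => //; exists n => //; split; rewrite /oball /=.
    by rewrite (dsym hd).
  have := dtri hd (q k) a b; rewrite (dsym hd (q k) a).
  have : rho n * 2 = n.+1%:R^-1 by rewrite /rho mulfVK.
  move=> h1 h2; move: h1 h2 hk hn; set u := n.+1%:R^-1; set v := rho n; lra.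
apply: bigcupT_measurable => k; apply: bigcupT_measurable => n.
by apply: measurableX; apply: oball_meas.
Qed.

Lemma d_meas (q : nat -> T) :
  (forall x e, 0 < e -> exists k, d x (q k) < e) ->
  measurable_fun setT (fun z : T * T => d z.1 z.2).
Proof.
move=> hq.
have mE : (@measurable _ R) = <<s (@RGenInftyO.G R) >> by exact: RGenInftyO.measurableE.
apply: (@measurability _ _ _ _ setT (fun z : T * T => d z.1 z.2) _ mE).
move=> _ [_ [x ->] <-]; rewrite setTI.
have -> : (fun z : T * T => d z.1 z.2) @^-1` `]-oo, x[ =
   [set z : T * T | d z.1 z.2 < x].
  by apply/seteqP; split => z /=; rewrite in_itv /=.
exact: (lt_meas q hq).
Qed.

Lemma d2_meas (q : nat -> T) :
  (forall x e, 0 < e -> exists k, d x (q k) < e) ->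
  measurable_fun setT (fun z : T * T => ((d z.1 z.2) ^+ 2)%:E).
Proof.
move=> hq; apply/measurable_EFinP; apply: measurable_funX.
exact: (d_meas q hq).
Qed.

End MeasFacts.

Section Geo.
Context {R : realType}.
Implicit Types (ep de : R).

Lemma geo_pos ep n : 0 < ep -> 0 < ep / 2 ^+ n.
Proof. by move=> h; rewrite divr_gt0 // exprn_gt0. Qed.

Lemma geo_S ep n : ep / 2 ^+ n.+1 = ep / 2 ^+ n / 2.
Proof.
by rewrite exprS invfM mulrA [_ / 2 / _]mulrAC.
Qed.

Lemma geo_mono ep n m : 0 < ep -> (n <= m)%N -> ep / 2 ^+ m <= ep / 2 ^+ n.
Proof.
move=> ep0 nm.
have p1 : (2 ^+ m : R) \is Num.pos by rewrite posrE exprn_gt0.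
have p2 : (2 ^+ n : R) \is Num.pos by rewrite posrE exprn_gt0.
by rewrite ler_pM2l // lef_pV2 // ler_eXn2l // ltr1n.
Qed.

Lemma geo_small ep de : 0 < ep -> 0 < de -> exists N, ep / 2 ^+ N < de.
Proof.
move=> ep0 de0.
have [k hk] := ltr_add_invr (divr_gt0 de0 ep0).
rewrite add0r ltr_pdivlMr // in hk.
exists k.+1.
have K0 : 0 < k.+1%:R :> R by rewrite ltr0n.
have h2 : k.+1%:R <= 2 ^+ k.+1 :> R.
  by rewrite -natrX ler_nat ltnW // ltn_expl.
have h1 : ep <= de * k.+1%:R.
  have := ler_wpM2l (ltW K0) (ltW hk).
  by rewrite mulrA mulfV ?mul1r ?gt_eqF // mulrC.
rewrite ltr_pdivrMr ?exprn_gt0 //.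
have : de * k.+1%:R < de * 2 ^+ k.+1.
  rewrite ltr_pM2l //.
  by rewrite -natrX ltr_nat ltn_expl.
lra.
Qed.

End Geo.
Section Main.
Context {R : realType} {dx dy : measure_display}
  {X : measurableType dx} {Y : measurableType dy}
  (dX : X -> X -> R) (dY : Y -> Y -> R)
  (mX : {measure set X -> \bar R}) (mY : {measure set Y -> \bar R})
  (p : X -> Y) (mu : Y -> probability X R).
Hypotheses (hX : mm_space dX mX) (hY : mm_space dY mY)
  (lip : forall x x', dY (p x) (p x') <= dX x x')
  (push : forall A, measurable A -> mY A = mX (p @^-1` A))
  (dis : is_disintegration mX mY p mu).
Variable G : set Y.
Hypotheses (mG : measurable G) (G0 : mY (~` G) = 0%E)
  (Gfib : forall y, G y -> mu y (~` (p @^-1` [set y])) = 0%E)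
  (GW : forall y y', G y -> G y' -> W2 dX (mu y) (mu y') = (dY y y')%:E).

Let hdX : is_metric dX. Proof. by case: hX. Qed.
Let hdY : is_metric dY. Proof. by case: hY. Qed.
Let hBX : (@measurable _ X) = <<s metric_open dX >>. Proof. by case: hX. Qed.
Let hBY : (@measurable _ Y) = <<s metric_open dY >>. Proof. by case: hY. Qed.

Lemma fib_closed y : metric_closed dX (p @^-1` [set y]).
Proof.
move=> x /= hx; exists (dY (p x) y).
  rewrite lt_neqAle dge0 // andbT eq_sym; apply/eqP => /(deq0 hdY) //.
move=> z; rewrite /oball /= => hz pz; move: hz; rewrite -pz.
by move=> /(le_lt_trans (lip x z)); rewrite ltxx.
Qed.

Lemma fib_meas y : measurable (p @^-1` [set y]).
Proof. exact: (closed_meas _ hBX _ (fib_closed y)). Qed.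

Lemma W2_approx y y' eps : G y -> G y' -> 0 < eps ->
  exists pi : probability (X * X)%type R, coupling (mu y) (mu y') pi /\
    (\int[pi]_z ((dX z.1 z.2) ^+ 2)%:E < ((dY y y') ^+ 2 + eps)%:E)%E.
Proof.
move=> Gy Gy' e0; have := GW _ _ Gy Gy'; rewrite /W2.
have hlt : forall c, (W2sq dX (mu y) (mu y') <= c%:E)%E ->
    c < (dY y y') ^+ 2 + eps ->
  exists pi : probability (X * X)%type R, coupling (mu y) (mu y') pi /\
    (\int[pi]_z ((dX z.1 z.2) ^+ 2)%:E < ((dY y y') ^+ 2 + eps)%:E)%E.
  move=> c hc hc'; have : (W2sq dX (mu y) (mu y') < ((dY y y') ^+ 2 + eps)%:E)%E.
    by apply: le_lt_trans hc _; rewrite lte_fin.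
  move=> /ereal_inf_lt [v [pi [cpi ->]] hv]; by exists pi.
case E: (W2sq dX (mu y) (mu y')) => [r| |] // [] hr.
have [r0|r0] := leP 0 r.
  apply: (hlt r); first by rewrite E.
  by rewrite -hr sqr_sqrtr // ltrDl.
apply: (hlt r); first by rewrite E.
by apply: lt_le_trans r0 _; rewrite addr_ge0 // ?sqr_ge0 // ltW.
Qed.


Variable q : nat -> X.
Hypothesis hq : forall x e, 0 < e -> exists k, dX x (q k) < e.

Lemma pos_mem z B : G z -> measurable B -> (0 < mu z B)%E ->
  exists a, B a /\ p a = z.
Proof.
move=> Gz mB hB; apply: contrapT => hn.
have sub : B `<=` ~` (p @^-1` [set z]) by move=> a Ba pa; apply: hn; exists a.
have : (mu z B <= mu z (~` (p @^-1` [set z])))%E.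
  by apply: le_measure; rewrite ?inE //; apply: measurableC; exact: fib_meas.
by rewrite Gfib // leNgt hB.
Qed.

Lemma step z z' c e e' eta : G z -> G z' -> 0 < e' -> 0 < eta ->
  (0 < mu z (oball dX c e))%E ->
  exists c', (0 < mu z' (oball dX c' e'))%E /\
    dX c c' < e + dY z z' + eta + e'.
Proof.
move=> Gz Gz' e'0 eta0 hU.
set D := dY z z'; set U := oball dX c e.
have D0 : 0 <= D by apply: dge0.
have mU : measurable U by exact: (oball_meas _ hdX hBX c e).
set F1 := p @^-1` [set z]; set F2 := p @^-1` [set z'].
have mF1 : measurable F1 by apply: fib_meas.
have mF2 : measurable F2 by apply: fib_meas.
have finU : mu z U \is a fin_num by apply: fin_num_measure.
set m := fine (mu z U).
have mE : mu z U = m%:E by rewrite fineK.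
have m0 : 0 < m by rewrite -lte_fin -mE.
set kap := (D + eta) ^+ 2 - D ^+ 2.
have kap0 : 0 < kap by rewrite /kap; nra.
have [pi [[cp1 cp2] hint]] := W2_approx _ _ _ Gz Gz' (mulr_gt0 kap0 m0).
set S := [set w : X * X | dX w.1 w.2 < D + eta].
have mS : measurable S by apply: (lt_meas _ hdX hBX q hq).
set W := (U `*` setT) `&` S.
have mW : measurable W by apply: measurableI => //; apply: measurableX.
have Wpos : (0 < pi W)%E.
  rewrite lt0e measure_ge0 andbT; apply/eqP => W0.
  set A1 := F1 `*` F2; set A2 := (U `*` setT) `\` S.
  have mA1 : measurable A1 by apply: measurableX.
  have mA2 : measurable A2 by apply: measurableD => //; apply: measurableX.
  have fin1 : pi A1 \is a fin_num by apply: fin_num_measure.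
  have fin2 : pi A2 \is a fin_num by apply: fin_num_measure.
  set a1 := fine (pi A1); set a2 := fine (pi A2).
  have a1E : pi A1 = a1%:E by rewrite fineK.
  have a2E : pi A2 = a2%:E by rewrite fineK.
  have a1E' : (pi : {measure set (X * X)%type -> \bar R}) A1 = a1%:E by exact: a1E.
  have a2E' : (pi : {measure set (X * X)%type -> \bar R}) A2 = a2%:E by exact: a2E.
  have mC1 : measurable (~` F1 `*` [set: X]) by apply: measurableX => //; apply: measurableC.
  have mC2 : measurable ([set: X] `*` ~` F2) by apply: measurableX => //; apply: measurableC.
  have a1ge : 1 <= a1.
    have : (pi setT <= pi A1 + pi (~` F1 `*` setT) + pi (setT `*` ~` F2))%E.
      apply: (@le_trans _ _ (pi (A1 `|` (~` F1 `*` setT) `|` (setT `*` ~` F2)))).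
        apply: le_measure; rewrite ?inE //.
          by apply: measurableU => //; apply: measurableU.
      move=> [a b] _; have [a1'|a1'] := pselect (F1 a); last by left; right.
      have [b1'|b1'] := pselect (F2 b); last by right.
      by left; left.
      apply: le_trans (measureU2 _ _ _) _ => //; first by apply: measurableU.
      by apply: leeD => //; exact: measureU2.
    rewrite probability_setT cp1 ?cp2; try by apply: measurableC.
    by rewrite (Gfib _ Gz) (Gfib _ Gz') !addr0 a1E lee_fin.
  have a2ge : m <= a2.
    have : (pi (U `*` setT) <= pi A2 + pi W)%E.
      apply: (@le_trans _ _ (pi (A2 `|` W))); last exact: measureU2.
      apply: le_measure; rewrite ?inE //; try by apply: measurableU.
        by apply: measurableX.
      move=> w Uw; have [Sw|Sw] := pselect (S w); first by right.
      by left.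
    by rewrite cp1 // W0 addr0 a2E mE lee_fin.
  have mi1 : measurable_fun setT (fun w : X * X => (\1_A1 w : R)%:E).
    by apply/measurable_EFinP; exact: (@measurable_indic _ _ R setT A1 mA1).
  have mi2 : measurable_fun setT (fun w : X * X => (\1_A2 w : R)%:E).
    by apply/measurable_EFinP; exact: (@measurable_indic _ _ R setT A2 mA2).
  have int1 : (\int[pi]_w ((D ^+ 2)%:E * (\1_A1 w : R)%:E + kap%:E * (\1_A2 w : R)%:E)
     = (D ^+ 2 * a1 + kap * a2)%:E)%E.
    rewrite ge0_integralD //; last first.
    - exact: measurable_funeM.
    - by move=> w _; rewrite -EFinM lee_fin mulr_ge0 // ?ltW.
    - exact: measurable_funeM.
    - by move=> w _; rewrite -EFinM lee_fin mulr_ge0 // sqr_ge0.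
    rewrite ge0_integralZl_EFin //; last by rewrite sqr_ge0.
    rewrite ge0_integralZl_EFin //; last by rewrite ltW.
    by rewrite !integral_indic // !setIT a1E' a2E' -!EFinM -EFinD.
  have le1 : (\int[pi]_w ((D ^+ 2)%:E * (\1_A1 w : R)%:E + kap%:E * (\1_A2 w : R)%:E)
     <= \int[pi]_w ((dX w.1 w.2) ^+ 2)%:E)%E.
    apply: ge0_le_integral => //.
    - by move=> w _; rewrite -!EFinM -EFinD lee_fin addr_ge0 // mulr_ge0 // ?sqr_ge0 ?ltW.
    - by apply: emeasurable_funD; apply: measurable_funeM.
    - exact: (d2_meas _ hdX hBX q hq).
    move=> [a b] _; rewrite -!EFinM -EFinD lee_fin !indicE /=.
    have dab0 : 0 <= dX a b by apply: dge0.
    have [inA1|inA1] := boolP ((a, b) \in A1); have [inA2|inA2] := boolP ((a, b) \in A2);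
      rewrite /= ?mulr1 ?mulr0 ?addr0 ?add0r.
    - move: inA2; rewrite inE => -[_ /= nS].
      have : D + eta <= dX a b by rewrite leNgt; apply/negP.
      by rewrite /kap; nra.
    - move: inA1; rewrite inE => -[/= pa pb].
      have : D <= dX a b by rewrite /D -pa -pb; apply: lip.
      by nra.
    - move: inA2; rewrite inE => -[_ /= nS].
      have : D + eta <= dX a b by rewrite leNgt; apply/negP.
      by rewrite /kap; nra.
    - exact: sqr_ge0.
  have := lt_le_trans (le_lt_trans le1 hint) (lexx _).
  rewrite int1 lte_fin => h.
  have h1 : D ^+ 2 <= D ^+ 2 * a1 by rewrite ler_peMr ?sqr_ge0.
  have h2 : kap * m <= kap * a2 by rewrite ler_pM2l.
  rewrite -/D in h; lra.
have [k hk] : exists k, (0 < pi (W `&` (setT `*` oball dX (q k) e')))%E.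
  apply: contrapT => hn.
  have mWk : forall k, measurable (W `&` (setT `*` oball dX (q k) e')).
    by move=> k; apply: measurableI => //; apply: measurableX => //; apply: (oball_meas _ hdX hBX (q k) e').
  have Wk0 : forall k, pi (W `&` (setT `*` oball dX (q k) e')) = 0%E.
    move=> k; apply/eqP; rewrite eq_le measure_ge0 andbT leNgt; apply/negP => h.
    by apply: hn; exists k.
  have neg : pi.-negligible (\bigcup_k (W `&` (setT `*` oball dX (q k) e'))).
    by apply: negligible_bigcup => k; apply/negligibleP => //; apply: Wk0.
  have cov : W `<=` \bigcup_k (W `&` (setT `*` oball dX (q k) e')).
    move=> w Ww; have [k hk] := hq w.2 e' e'0; exists k => //; split => //.
    by split => //=; rewrite /oball /= dsym.
  have := measure_negligible mW (negligibleS cov neg).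
  by move=> h; move: Wpos; rewrite h ltxx.
exists (q k); split.
  apply: lt_le_trans hk _; rewrite -cp2; last by apply: (oball_meas _ hdX hBX (q k) e').
  apply: le_measure; rewrite ?inE //; first [
    by move=> w [_ []] |
    by apply: measurableX => //; apply: (oball_meas _ hdX hBX (q k) e') |
    by apply: measurableI => //; apply: measurableX => //; apply: (oball_meas _ hdX hBX (q k) e')].
have [[a b] [[[Ua _] Sab] [_ Bb]]] : (W `&` (setT `*` oball dX (q k) e')) !=set0.
  by apply/set0P; apply/eqP => h; move: hk; rewrite h measure0 ltxx.
move: Ua Sab Bb; rewrite /U /S /oball /= => Ua Sab Bb.
have := dtri hdX c a (q k); have := dtri hdX a b (q k).
rewrite (dsym hdX b (q k)); lra.
Qed.


Lemma start x e : 0 < e -> exists z, G z /\ (0 < mu z (oball dX x e))%E.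
Proof.
move=> e0; set B := oball dX x e.
have mB : measurable B by exact: (oball_meas _ hdX hBX x e).
have pos : (0 < mX B)%E by case: hX => _ _ _ _ h; case: (h x e e0).
apply: contrapT => hn.
have h0 : forall z, G z -> mu z B = 0%E.
  move=> z Gz; apply/eqP; rewrite eq_le measure_ge0 andbT leNgt; apply/negP => h.
  by apply: hn; exists z.
case: dis => dmeas _ dint.
have mi : measurable_fun setT (fun w => (\1_B w : R)%:E).
  by apply/measurable_EFinP; exact: (@measurable_indic _ _ R setT B mB).
have := dint (fun w => (\1_B w : R)%:E) mi.
rewrite integral_indic // setIT.
have eqf : (fun y => (\int[mu y]_w ((\1_B w : R)%:E))%E) = (fun y => mu y B).
  by apply: funext => y; rewrite integral_indic // setIT.
rewrite eqf.
have mf : measurable_fun setT (fun y => mu y B) by apply: dmeas.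
rewrite -(setUv G) integral_setU //; last 3 first.
- exact: measurableC.
- by rewrite setUv.
- by rewrite /disj_set setICr.
have I1 : (\int[mY]_(y in G) mu y B)%E = 0%E.
  by apply: integral0_eq => y Gy; apply: h0.
have I2 : (\int[mY]_(y in ~` G) mu y B)%E = 0%E.
  apply: null_set_integral => //; first exact: measurableC.
  exact: (measurable_funS measurableT _ mf).
rewrite I1 I2 addr0 => hB.
have hB0 : mX B = 0%E by apply: hB => w; rewrite lee_fin indicE ler0n.
by move: pos; rewrite hB0 ltxx.
Qed.

Lemma near_G y' eps : 0 < eps -> exists z, G z /\ dY y' z < eps.
Proof.
move=> e0; set B := oball dY y' eps.
have mB : measurable B by exact: (oball_meas _ hdY hBY y' eps).
have pos : (0 < mY B)%E by case: hY => _ _ _ _ h; case: (h y' eps e0).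
apply: contrapT => hn.
have sub : B `<=` ~` G by move=> z Bz Gz; apply: hn; exists z.
have : (mY B <= mY (~` G))%E by apply: le_measure; rewrite ?inE //; exact: measurableC.
by rewrite G0 leNgt pos.
Qed.

Lemma sup_main x y' r : dY (p x) y' < r -> exists x', p x' = y' /\ dX x x' < r.
Proof.
move=> hr.
set s := r - dY (p x) y'.
have s0 : 0 < s by rewrite subr_gt0.
set ep := s / 20.
have ep0 : 0 < ep by rewrite divr_gt0.
pose e n := ep / 2 ^+ n.
have e0 n : 0 < e n := geo_pos ep n ep0.
have eS n : e n.+1 * 2 = e n by rewrite /e geo_S mulfVK // pnatr_eq0.
have eE : e 0 = ep by rewrite /e expr0 divr1.
have emono n m : (n <= m)%N -> e m <= e n by move=> nm; apply: geo_mono.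
have esmall de : 0 < de -> exists N, e N < de by move=> de0; apply: geo_small.
clearbody e.
have [z0 [Gz0 hz0]] := start x (e 0) (e0 0).
have [zs hzs] := @choice nat Y (fun n z => G z /\ dY y' z < e n)
   (fun n => near_G y' (e n) (e0 n)).
pose Z n := if n is 0 then z0 else zs n.
have GZ n : G (Z n) by case: n => [|n] //=; case: (hzs n.+1).
have hx0 : dY (p x) z0 < e 0.
  have [a [Ba pa]] := pos_mem _ _ Gz0 (oball_meas _ hdX hBX x (e 0)) hz0.
  by rewrite -pa; apply: le_lt_trans (lip x a) Ba.
have dZ n : dY (Z n) (Z n.+1) <
    e n + (if n is 0 then dY (p x) y' else e n) + e n.+1.
  case: n => [|n] /=.
    have := dtri hdY z0 (p x) (zs 1); have := dtri hdY (p x) y' (zs 1).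
    have [_ h1] := hzs 1; rewrite (dsym hdY z0 (p x)); lra.
  have := dtri hdY (zs n.+1) y' (zs n.+2).
  have [_ h1] := hzs n.+1; have [_ h2] := hzs n.+2.
  have := e0 n.+1; rewrite (dsym hdY (zs n.+1) y'); lra.
have nxt : forall nc : nat * X, exists c' : X,
   (0 < mu (Z nc.1) (oball dX nc.2 (e nc.1)))%E ->
   (0 < mu (Z nc.1.+1) (oball dX c' (e nc.1.+1)))%E /\
   dX nc.2 c' < e nc.1 + dY (Z nc.1) (Z nc.1.+1) + e nc.1 + e nc.1.+1.
  move=> [n c] /=.
  have [P|nP] := pselect ((0 < mu (Z n) (oball dX c (e n)))%E); last by exists c.
  have [c' [h1 h2]] := step _ _ _ _ _ _ (GZ n) (GZ n.+1) (e0 n.+1) (e0 n) P.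
  by exists c'.
have [f hf] := @choice (nat * X)%type X _ nxt.
pose c := fix c n := if n is k.+1 then f (k, c k) else x.
have Pc : forall n, (0 < mu (Z n) (oball dX (c n) (e n)))%E.
  by elim=> [|n IH] //=; exact: ((hf (n, c n)) IH).1.
have dc n : dX (c n) (c n.+1) < e n + dY (Z n) (Z n.+1) + e n + e n.+1.
  exact: ((hf (n, c n)) (Pc n)).2.
have dc1 n : (0 < n)%N -> dX (c n) (c n.+1) < 5 * e n.
  move=> n0; have := dc n; have := dZ n; have := eS n.
  by case: n n0 => // n _ /=; lra.
have dc0 : dX (c 0) (c 1) < 4 * e 0 + dY (p x) y'.
  by have := dc 0; have := dZ 0; have := eS 0; rewrite /=; lra.
have tail n k : (0 < n)%N -> dX (c n) (c (n + k)%N) <= 10 * e n - 10 * e (n + k)%N.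
  move=> n0; elim: k => [|k IH]; first by rewrite addn0 dxx // subrr.
  have := dtri hdX (c n) (c (n + k)%N) (c (n + k).+1).
  have := dc1 (n + k)%N (leq_trans n0 (leq_addr _ _)).
  have := eS (n + k)%N; rewrite addnS; lra.
have cauchy : forall de, 0 < de -> exists N, forall m n,
    (N <= m)%N -> (N <= n)%N -> dX (c m) (c n) < de.
  move=> de de0; have [M hM] := esmall _ (divr_gt0 de0 (ltr0n _ 20)).
  exists M.+1 => m n hm hn.
  have hle : e M.+1 <= e M by apply: emono.
  have t1 := tail M.+1 (m - M.+1)%N isT; rewrite subnKC // in t1.
  have t2 := tail M.+1 (n - M.+1)%N isT; rewrite subnKC // in t2.
  have := dtri hdX (c m) (c M.+1) (c n); rewrite (dsym hdX (c m) (c M.+1)).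
  have := e0 m; have := e0 n; lra.
have [cl hcl] : exists cl, forall de, 0 < de -> exists N, forall n,
    (N <= n)%N -> dX (c n) cl < de.
  by case: hX => _ hc _ _ _; apply: hc.
exists cl; split; last first.
  have [N1 hN1] := hcl ep ep0.
  have t := tail 1 N1 isT; rewrite add1n in t.
  have := hN1 N1.+1 (leqnSn _).
  have := dtri hdX (c 0) (c N1.+1) cl; have := dtri hdX (c 0) (c 1) (c N1.+1).
  have := eS 0; have := e0 N1.+1.
  have epE : ep * 20 = r - dY (p x) y' by rewrite /ep /s mulfVK // pnatr_eq0.
  move=> h1 h2 h3 h4 h5; change (dX (c 0) cl < r); move: eE epE; clearbody ep; lra.
apply: (deq0 hdY); apply/eqP; rewrite eq_le dge0 // andbT.
apply/ler_addgt0Pr => de de0; rewrite add0r.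
have de3 : 0 < de / 3 by rewrite divr_gt0.
have [M hM] := esmall _ de3.
have [N1 hN1] := hcl _ de3.
set n := (maxn M N1).+1.
have [a [Ba pa]] := pos_mem _ _ (GZ n) (oball_meas _ hdX hBX (c n) (e n)) (Pc n).
have hn1 := hN1 n (leq_trans (leq_maxr M N1) (leqnSn _)).
have hle : e n <= e M by apply: emono; apply: leq_trans (leq_maxl M N1) (leqnSn _).
have [_ hz] := hzs n.
move: Ba; rewrite /oball /= => Ba.
have := lip cl a; rewrite pa /=.
have := dtri hdY (p cl) (zs n) y'; rewrite (dsym hdY (zs n) y').
have := dtri hdX cl (c n) a; rewrite (dsym hdX cl (c n)).
lra.
Qed.

End Main.

Theorem lemma3p8 (R : realType) (dx dy : measure_display)
    (X : measurableType dx) (Y : measurableType dy)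
    (dX : X -> X -> R) (dY : Y -> Y -> R)
    (mX : {measure set X -> \bar R}) (mY : {measure set Y -> \bar R})
    (p : X -> Y) (mu : Y -> probability X R) :
  mm_space dX mX -> mm_space dY mY ->
  (forall x x', dY (p x) (p x') <= dX x x') ->
  (forall A, measurable A -> mY A = mX (p @^-1` A)) ->
  is_disintegration mX mY p mu ->
  (exists Omega : set Y, [/\ measurable Omega, mY (~` Omega) = 0%E &
     forall y y', Omega y -> Omega y' -> W2 dX (mu y) (mu y') = (dY y y')%:E]) ->
  (* p is a submetry *)
  submetry dX dY p /\
  (* in particular: the fibers {p^-1(y)}_y form a metric foliation of X ... *)
  [/\ forall y, p @^-1` [set y] !=set0,
      forall y, metric_closed dX (p @^-1` [set y]),
      forall y y' x, p x = y ->
        dist_set dX (p @^-1` [set y]) (p @^-1` [set y']) =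
        dist_pt_set dX x (p @^-1` [set y']),
  (* ... which is a metric measure foliation: m^* locally finite and the
     disintegration satisfies W2(mu_F, mu_F') = d^*(F, F') a.e. ... *)
      (forall y, exists2 r : R, 0 < r &
         (mX [set x | (dist_set dX (p @^-1` [set p x]) (p @^-1` [set y]) < r)%R]
           < +oo)%E) &
      (exists Omega : set Y, [/\ measurable Omega, mY (~` Omega) = 0%E &
         forall y y', Omega y -> Omega y' ->
           W2 dX (mu y) (mu y') =
           (dist_set dX (p @^-1` [set y]) (p @^-1` [set y']))%:E])] /\
  (* ... and Y is mm-isomorphic to X^* via y |-> p^-1(y): the map is an
     isometry (d^*(p^-1 y, p^-1 y') = dY y y') and measure preserving *)
  (forall y y', dist_set dX (p @^-1` [set y]) (p @^-1` [set y']) = dY y y') /\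
  (forall A, measurable A ->
     mX [set x | exists2 y, A y & p @^-1` [set y] = p @^-1` [set p x]] = mY A).
Proof.
move=> hX hY lip push dis [Om [mOm Om0 OmW]].
have hdX : is_metric dX by case: hX.
have hdY : is_metric dY by case: hY.
have hBY : (@measurable _ Y) = <<s metric_open dY >> by case: hY.
have hsep : metric_separable dX by case: hX.
have [N [mN N0 subN]] : exists N, [/\ measurable N, mY N = 0%E &
    ~` [set y | mu y (~` (p @^-1` [set y])) = 0%E] `<=` N].
  by case: dis => _ h _; exact: h.
set G := Om `\` N.
have mG : measurable G by apply: measurableD.
have G0 : mY (~` G) = 0%E.
  apply/eqP; rewrite eq_le measure_ge0 andbT.
  rewrite /G setCD.
  have : (mY (~` Om `|` N) <= mY (~` Om) + mY N)%E.
    by apply: measureU2 => //; exact: measurableC.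
  by rewrite Om0 N0 addr0.
have Gfib : forall y, G y -> mu y (~` (p @^-1` [set y])) = 0%E.
  move=> y [_ Ny]; apply: contrapT => h; apply: Ny; exact: subN.
have GW : forall y y', G y -> G y' -> W2 dX (mu y) (mu y') = (dY y y')%:E.
  by move=> y y' [Oy _] [Oy' _]; apply: OmW.
have SUB : submetry dX dY p.
  move=> x r r0; apply/seteqP; split.
    move=> _ [x' hx' <-]; move: hx'; rewrite /oball /= => hx'.
    exact: le_lt_trans (lip x x') hx'.
  move=> y' hy'; have [q hq] := dense_seq dX x hsep.
  have [x' [px' dx']] := sup_main _ _ _ _ _ _ hX hY lip dis _ mG G0 Gfib GW _ hq _ _ _ hy'.
  by exists x'.
have surj : forall y, exists x, p x = y.
  move=> y; have : (0 < mY (oball dY y 1))%E by case: hY => _ _ _ _ h; case: (h y 1 ltr01).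
  rewrite push; last exact: (oball_meas _ hdY hBY).
  have [->|/set0P[x0 hx0]] := eqVneq (p @^-1` oball dY y 1) set0.
    by move=> h0; rewrite measure0 ltxx in h0.
  move=> _; move: hx0; rewrite /oball /= => hx0.
  have : oball dY (p x0) 1 y by rewrite /oball /= dsym.
  by rewrite -(SUB x0 1 ltr01) => -[x _ px]; exists x.
have distE : forall y y', dist_set dX (p @^-1` [set y]) (p @^-1` [set y']) = dY y y'.
  move=> y y'; apply: inf_eqP.
    move=> _ [[a b] [/= pa pb] <-] /=; rewrite -pa -pb; exact: lip.
  move=> eps eps0; have [x px] := surj y.
  have : oball dY (p x) (dY y y' + eps) y' by rewrite /oball /= px ltrDl.
  rewrite -(SUB x _ (ltr_wpDl (dge0 hdY y y') eps0)) => -[x' hx' px'].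
  exists (dX x x'); first by exists (x, x').
  by move: hx'; rewrite /oball.
have ptE : forall y y' x, p x = y -> dist_pt_set dX x (p @^-1` [set y']) = dY y y'.
  move=> y y' x px; apply: inf_eqP.
    move=> _ [b /= pb <-]; rewrite -px -pb; exact: lip.
  move=> eps eps0.
  have : oball dY (p x) (dY y y' + eps) y' by rewrite /oball /= px ltrDl.
  rewrite -(SUB x _ (ltr_wpDl (dge0 hdY y y') eps0)) => -[x' hx' px'].
  exists (dX x x'); first by exists x'.
  by move: hx'; rewrite /oball.
split; first exact: SUB.
split; last split.
- split.
  + by move=> y; have [x px] := surj y; exists x.
  + exact: (@fib_closed _ _ _ _ _ dX dY mY p hY lip).
  + by move=> y y' x px; rewrite distE (ptE y y' x px).
  + move=> y; exists 1 => //.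
    have -> : [set x | dist_set dX (p @^-1` [set p x]) (p @^-1` [set y]) < 1] =
        p @^-1` (oball dY y 1).
      by apply/seteqP; split => x; rewrite /= distE /oball /= dsym.
    rewrite -push; last exact: (oball_meas _ hdY hBY).
    by case: hY => _ _ _ _ h; case: (h y 1 ltr01).
  + exists Om; split => // y y' Oy Oy'; rewrite distE; exact: OmW.
- exact: distE.
- move=> A mA; rewrite push //; congr (mX _).
  apply/seteqP; split => x /=.
    move=> [y Ay hF].
    have : (p @^-1` [set p x]) x by [].
    by rewrite -hF /= => ->.
  by move=> Ax; exists (p x).
Qed.
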